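(* In the setting of the context, for the functions $S,E,I,R$ defined there, \[ S'(\infty)=E'(\infty)=I'(\infty)=R'(\infty)=0, \] where $f'(\infty):=\lim_{t\to\infty}f'(t)$.
   Context: Let $\beta,\gamma,\delta>0$ be constants and $\tilde S,\tilde E,\tilde I,\tilde R$ real numbers with $N:=\tilde S+\tilde E+\tilde I+\tilde R>0$. Standing assumptions: (A1) $\tilde I>0$; (A2) $\tilde E>(\gamma/\delta)\tilde I$; (A3) $\tilde S>\delta\tilde E/(\beta\tilde I)$; (A4) $\tilde R\ge 0$ and $N>\tilde S e^{(\beta/\gamma)\tilde R}+\tilde R$. Let $\alpha$ be the unique solution in $(\tilde R,N)$ of $x=N-\tilde S e^{(\beta/\gamma)\tilde R}e^{-(\beta/\gamma)x}$, and assume (A5) $\tilde S<(\gamma/\beta)e^{(\beta/\gamma)(\alpha-\tilde R)}$. Put $u_0:=e^{-(\beta/\gamma)\tilde R}$, $u_\infty:=e^{-(\beta/\gamma)\alpha}$. Let $\psi$ be the unique function, continuous and positive on $(u_\infty,u_0]$ and $C^1$ on $(u_\infty,u_0)$, satisfying $\psi'(u)\psi(u)-\frac{\gamma+\delta}{u}\psi(u)=-\delta\,\frac{\beta N-\beta\tilde S e^{(\beta/\gamma)\tilde R}u+\gamma\log u}{u}$ on $(u_\infty,u_0)$ and $\psi(u_0)=\beta\tilde I$. Let $\varphi(u):=\int_u^{u_0}\frac{d\xi}{\xi\psi(\xi)}$; $\varphi$ is a strictly decreasing continuous bijection from $(u_\infty,u_0]$ onto $[0,\infty)$, $C^1$ on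 $(u_\infty,u_0)$, with inverse $\varphi^{-1}:[0,\infty)\to(u_\infty,u_0]$. For $t\ge 0$ define $S(t)=\tilde S e^{(\beta/\gamma)\tilde R}\varphi^{-1}(t)$, $E(t)=\tilde E e^{-\delta t}+\tilde S e^{(\beta/\gamma)\tilde R}e^{-\delta t}\int_{\varphi^{-1}(t)}^{u_0}e^{\delta\varphi(v)}dv$, $I(t)=N-\tilde S e^{(\beta/\gamma)\tilde R}\varphi^{-1}(t)+\frac{\gamma}{\beta}\log\varphi^{-1}(t)-E(t)$, $R(t)=-\frac{\gamma}{\beta}\log\varphi^{-1}(t)$. *)

(* Defs.v *)
From Stdlib Require Import Reals.
From Coquelicot Require Import Coquelicot.
Open Scope R_scope.

Definition cont_on_Ioc (f : R -> R) (a b : R) : Prop :=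
  forall u, a < u <= b ->
    forall eps, 0 < eps -> exists del, 0 < del /\
      forall x, a < x <= b -> Rabs (x - u) < del -> Rabs (f x - f u) < eps.

Definition C1_on_Ioo (f : R -> R) (a b : R) : Prop :=
  forall u, a < u < b -> ex_derive f u /\ continuous (Derive f) u.

Definition phi_of (psi : R -> R) (u0 u : R) : R :=
  RInt (fun xi => / (xi * psi xi)) u u0.

Definition S_of (beta gamma St Rt : R) (phiinv : R -> R) (t : R) : R :=
  St * exp ((beta / gamma) * Rt) * phiinv t.

Definition E_of (beta gamma delta St Et Rt u0 : R) (psi phiinv : R -> R)
    (t : R) : R :=
  Et * exp (- delta * t)
  + St * exp ((beta / gamma) * Rt) * exp (- delta * t)
    * RInt (fun v => exp (delta * phi_of psi u0 v)) (phiinv t) u0.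

Definition I_of (beta gamma delta St Et Rt N u0 : R) (psi phiinv : R -> R)
    (t : R) : R :=
  N - St * exp ((beta / gamma) * Rt) * phiinv t
  + (gamma / beta) * ln (phiinv t)
  - E_of beta gamma delta St Et Rt u0 psi phiinv t.

Definition R_of (beta gamma : R) (phiinv : R -> R) (t : R) : R :=
  - (gamma / beta) * ln (phiinv t).

Definition deriv_at_infty_zero (f : R -> R) : Prop :=
  (forall t, 0 < t -> ex_derive f t) /\ is_lim (Derive f) p_infty 0.

(* Main.v *)
Require Import Defs.
From Stdlib Require Import Reals Lra.
From Coquelicot Require Import Coquelicot.
Open Scope R_scope.

Definition L0 (g : R -> R) := forall eps, 0 < eps -> exists T, forall t, T < t -> Rabs (g t) < eps.

Lemma L0_is_lim g : L0 g -> is_lim g p_infty 0.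
Proof.
  intros H P [eps HP].
  destruct (H eps (cond_pos eps)) as [T HT].
  exists T. intros t Ht. apply HP. unfold ball; simpl; unfold AbsRing_ball, minus, plus, opp, abs; simpl.
  replace (g t + - 0) with (g t) by ring. apply HT; auto.
Qed.

Lemma L0_comb a b f g : L0 f -> L0 g -> L0 (fun t => a * f t + b * g t).
Proof.
  intros Hf Hg eps He.
  set (k := Rabs a + Rabs b + 1).
  assert (Hk : 0 < k) by (unfold k; pose proof (Rabs_pos a); pose proof (Rabs_pos b); lra).
  destruct (Hf (eps / k)) as [T1 H1]. apply Rdiv_lt_0_compat; lra.
  destruct (Hg (eps / k)) as [T2 H2]. apply Rdiv_lt_0_compat; lra.
  exists (Rmax T1 T2). intros t Ht.
  assert (A1 := H1 t (Rle_lt_trans _ _ _ (Rmax_l _ _) Ht)).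
  assert (A2 := H2 t (Rle_lt_trans _ _ _ (Rmax_r _ _) Ht)).
  eapply Rle_lt_trans. apply Rabs_triang. rewrite !Rabs_mult.
  assert (Rabs a * Rabs (f t) <= Rabs a * (eps / k)) by (apply Rmult_le_compat_l; [apply Rabs_pos| lra]).
  assert (Rabs b * Rabs (g t) <= Rabs b * (eps / k)) by (apply Rmult_le_compat_l; [apply Rabs_pos| lra]).
  assert (Rabs a * (eps / k) + Rabs b * (eps / k) < eps).
  { replace (Rabs a * (eps / k) + Rabs b * (eps / k)) with (eps * ((Rabs a + Rabs b) / k)) by (field; lra).
    assert ((Rabs a + Rabs b) / k < 1). { apply Rmult_lt_reg_r with k; auto. unfold Rdiv. rewrite Rmult_assoc, Rinv_l by lra. unfold k; lra. }
    nra. }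
  lra.
Qed.

Lemma L0_ext f g T : (forall t, T < t -> f t = g t) -> L0 f -> L0 g.
Proof.
  intros He Hf eps Heps. destruct (Hf eps Heps) as [T1 H1].
  exists (Rmax T T1). intros t Ht. rewrite <- He. apply H1.
  eapply Rle_lt_trans; [apply Rmax_r|eauto]. eapply Rle_lt_trans; [apply Rmax_l|eauto].
Qed.

Lemma inv_deriv (F g : R -> R) (t D del : R) :
  0 < del -> D <> 0 -> derivable_pt_lim F (g t) D -> continuity_pt g t ->
  (forall s, Rabs (s - t) < del -> F (g s) = s) -> derivable_pt_lim g t (/ D).
Proof.
  intros Hdel HD HF Hg Hinv.
  set (p := g t).
  set (G := fun y => if Req_EM_T y p then D else (F y - F p) / (y - p)).
  assert (HG : continuity_pt G p).
  { intros eps Heps. destruct (HF eps Heps) as [d Hd].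
    exists d. split. apply cond_pos. intros y [_ Hy]. unfold R_dist in *.
    unfold G. destruct (Req_EM_T p p) as [_|C]; [|congruence].
    destruct (Req_EM_T y p) as [E|E].
    - simpl. unfold R_dist, Rminus. rewrite Rplus_opp_r, Rabs_R0. auto.
    - simpl in *. unfold R_dist in *. assert (Hh : y - p <> 0) by lra.
      specialize (Hd (y - p) Hh Hy). fold p in Hd. replace (p + (y - p)) with y in Hd by ring. auto. }
  assert (HGp : G p = D). { unfold G. destruct (Req_EM_T p p); congruence. }
  assert (HH : continuity_pt (comp (/ G) g) t).
  { apply continuity_pt_comp. auto. apply continuity_pt_inv. auto. fold p. rewrite HGp. auto. }
  intros eps Heps. destruct (HH eps Heps) as [d [Hd Hc]].
  exists (mkposreal _ (Rmin_pos _ _ Hd Hdel)). intros h Hh Hhd. simpl in Hhd.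
  assert (Hh1 : Rabs h < d) by (apply Rlt_le_trans with (Rmin d del); [exact Hhd|apply Rmin_l]).
  assert (Hh2 : Rabs h < del) by (apply Rlt_le_trans with (Rmin d del); [exact Hhd|apply Rmin_r]).
  assert (E1 : F (g (t + h)) = t + h) by (apply Hinv; replace (t + h - t) with h by ring; auto).
  assert (E0 : F p = t) by (apply Hinv; unfold Rminus; rewrite Rplus_opp_r, Rabs_R0; auto).
  assert (Hne : g (t + h) <> p).
  { intro E. rewrite E in E1. lra. }
  specialize (Hc (t + h)). unfold comp, inv_fct, R_dist in Hc. simpl in Hc.
  fold p in Hc. rewrite HGp in Hc.
  unfold G at 1 in Hc. destruct (Req_EM_T (g (t + h)) p) as [E|_]; [congruence|].
  rewrite E1, E0 in Hc.
  replace ((g (t + h) - g t) / h) with (/ ((t + h - t) / (g (t + h) - p))).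
  { apply Hc. split. unfold D_x, no_cond; split; auto. intro C. apply Hh. lra.
    simpl. unfold R_dist. replace (t + h - t) with h by ring. auto. }
  fold p. replace (t + h - t) with h by ring. field. split; auto. intro C; apply Hne; lra.
Qed.
Open Scope R_scope.

Section Main.
Variables beta gamma delta St N Rt alpha u0 uinf : R.
Variables psi phiinv : R -> R.
Hypothesis Hb : 0 < beta.
Hypothesis Hg : 0 < gamma.
Hypothesis Hd : 0 < delta.
Hypothesis HRa : Rt < alpha.
Hypothesis Halpha : alpha = N - St * exp ((beta / gamma) * Rt) * exp (- (beta / gamma) * alpha).
Hypothesis Hu0 : u0 = exp (- (beta / gamma) * Rt).
Hypothesis Huinf : uinf = exp (- (beta / gamma) * alpha).
Hypothesis Hcont : cont_on_Ioc psi uinf u0.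
Hypothesis Hpos : forall u, uinf < u <= u0 -> 0 < psi u.
Hypothesis HC1 : C1_on_Ioo psi uinf u0.
Hypothesis Hode : forall u, uinf < u < u0 ->
     Derive psi u * psi u - (gamma + delta) / u * psi u
     = - delta * ((beta * N - beta * St * exp ((beta / gamma) * Rt) * u
                   + gamma * ln u) / u).
Hypothesis Hinv : forall t, 0 <= t -> uinf < phiinv t <= u0 /\ phi_of psi u0 (phiinv t) = t.

Lemma uinf_pos : 0 < uinf.
Proof. rewrite Huinf; apply exp_pos. Qed.

Lemma uinf_u0 : uinf < u0.
Proof.
  rewrite Huinf, Hu0. apply exp_increasing.
  assert (0 < beta / gamma) by (apply Rdiv_lt_0_compat; lra). nra.
Qed.

Definition psit x := psi (Rmin x u0).
Definition fi x := / (x * psit x).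
Definition Phi u := RInt fi u u0.

Lemma psit_pos x : uinf < x -> 0 < psit x.
Proof.
  intros H. unfold psit. apply Hpos. split.
  apply Rmin_Rgt; split; auto. apply uinf_u0. apply Rmin_r.
Qed.

Lemma psit_cont x : uinf < x -> continuity_pt psit x.
Proof.
  intros Hx eps Heps. pose proof uinf_u0 as U.
  destruct (Rle_lt_dec x u0) as [Hle|Hlt].
  - destruct (Hcont x (conj Hx Hle) eps Heps) as [del [Hdel H]].
    exists (Rmin del (x - uinf)). split. apply Rmin_pos; lra.
    intros y [_ Hy]. simpl in *. unfold R_dist in *.
    assert (Hy1 : Rabs (y - x) < del) by (eapply Rlt_le_trans; [exact Hy|apply Rmin_l]).
    assert (Hy2 : Rabs (y - x) < x - uinf) by (eapply Rlt_le_trans; [exact Hy|apply Rmin_r]).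
    unfold psit. rewrite (Rmin_left x u0 Hle).
    apply Rabs_def2 in Hy2.
    apply H. split. apply Rmin_Rgt; split; lra. apply Rmin_r.
    unfold Rmin. destruct (Rle_dec y u0); auto.
    apply Rabs_def1; apply Rabs_def2 in Hy1; lra.
  - exists (x - u0). split. lra. intros y [_ Hy]. simpl in *. unfold R_dist in *.
    apply Rabs_def2 in Hy. unfold psit. rewrite !Rmin_right by lra.
    unfold Rminus. rewrite Rplus_opp_r, Rabs_R0. auto.
Qed.

Lemma fi_pos x : uinf < x -> 0 < fi x.
Proof.
  intros H. unfold fi. apply Rinv_0_lt_compat. apply Rmult_lt_0_compat.
  pose proof uinf_pos; lra. apply psit_pos; auto.
Qed.

Lemma fi_cont x : uinf < x -> continuous fi x.
Proof.
  intros H. apply continuity_pt_filterlim.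
  unfold fi. apply (continuity_pt_inv (fun x => x * psit x)).
  apply (continuity_pt_mult (fun x => x) psit). apply continuity_pt_id. apply psit_cont; auto.
  apply Rgt_not_eq. apply Rmult_lt_0_compat. pose proof uinf_pos; lra. apply psit_pos; auto.
Qed.

Lemma exRI a b : uinf < a -> uinf < b -> ex_RInt fi a b.
Proof.
  intros Ha Hb'. apply (ex_RInt_continuous (V:=R_CompleteNormedModule)). intros z [Hz1 Hz2]. apply fi_cont.
  eapply Rlt_le_trans; [|exact Hz1]. apply Rmin_Rgt; auto.
Qed.

Lemma Phi_deriv x : uinf < x -> is_derive Phi x (- fi x).
Proof.
  intros Hx. apply (is_derive_RInt' fi Phi x u0).
  exists (mkposreal _ (Rlt_Rminus _ _ Hx)). intros y Hy.
  unfold ball in Hy; simpl in Hy; unfold AbsRing_ball, abs, minus, plus, opp in Hy; simpl in Hy.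
  apply Rabs_def2 in Hy.
  unfold Phi. apply (RInt_correct (V:=R_CompleteNormedModule)). apply exRI. lra. apply uinf_u0.
  apply fi_cont; auto.
Qed.

Lemma Phi_decr x y : uinf < x -> x < y -> Phi y < Phi x.
Proof.
  intros Hx Hxy. unfold Phi.
  rewrite <- (RInt_Chasles fi x y u0).
  2: apply exRI; lra. 2: apply exRI; try lra; apply uinf_u0.
  assert (0 < RInt fi x y).
  { apply RInt_gt_0; auto. intros z Hz; apply fi_pos; lra.
    intros z Hz; apply fi_cont; lra. }
  change (plus (RInt fi x y) (RInt fi y u0)) with (RInt fi x y + RInt fi y u0). lra.
Qed.

Lemma Phi_u0 : Phi u0 = 0.
Proof. unfold Phi. rewrite RInt_point. reflexivity. Qed.

Lemma phi_Phi u : u <= u0 -> phi_of psi u0 u = Phi u.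
Proof.
  intros H. unfold phi_of, Phi. apply RInt_ext. intros x Hx.
  rewrite Rmax_right in Hx by auto. unfold fi, psit. rewrite Rmin_left by lra. reflexivity.
Qed.


Lemma Phi_le x y : uinf < x -> x <= y -> Phi y <= Phi x.
Proof.
  intros Hx Hxy. destruct (Rle_lt_or_eq_dec _ _ Hxy) as [H|H].
  left; apply Phi_decr; auto. subst; lra.
Qed.

Lemma Phi_nonneg x : uinf < x -> x <= u0 -> 0 <= Phi x.
Proof. intros. rewrite <- Phi_u0. apply Phi_le; auto. Qed.

Lemma p_range t : 0 < t -> uinf < phiinv t < u0 /\ Phi (phiinv t) = t.
Proof.
  intros Ht. destruct (Hinv t) as [[H1 H2] H3]; [lra|].
  rewrite phi_Phi in H3 by auto.
  split; auto. split; auto. destruct H2 as [H2|H2]; auto.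
  rewrite H2, Phi_u0 in H3. lra.
Qed.

Lemma p_cont t : 0 < t -> continuity_pt phiinv t.
Proof.
  intros Ht eps Heps.
  destruct (p_range t Ht) as [[P1 P2] P3].
  set (P := phiinv t) in *.
  set (a := Rmax (P - eps / 2) ((uinf + P) / 2)).
  set (b := Rmin (P + eps / 2) ((P + u0) / 2)).
  assert (Ha1 : uinf < a) by (unfold a; eapply Rlt_le_trans; [|apply Rmax_r]; lra).
  assert (Ha2 : a < P) by (unfold a; apply Rmax_lub_lt; lra).
  assert (Hb1 : P < b) by (unfold b; apply Rmin_glb_lt; lra).
  assert (Hb2 : b < u0) by (unfold b; eapply Rle_lt_trans; [apply Rmin_r|]; lra).
  assert (Ha3 : P - a <= eps / 2) by (unfold a; pose proof (Rmax_l (P - eps/2) ((uinf + P) / 2)); lra).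
  assert (Hb3 : b - P <= eps / 2) by (unfold b; pose proof (Rmin_l (P + eps/2) ((P + u0) / 2)); lra).
  assert (Fa : t < Phi a) by (rewrite <- P3; apply Phi_decr; auto).
  assert (Fb : Phi b < t) by (rewrite <- P3; apply Phi_decr; lra).
  assert (Fb0 : 0 <= Phi b) by (apply Phi_nonneg; lra).
  exists (Rmin (Phi a - t) (t - Phi b)). split. apply Rmin_pos; lra.
  intros s [_ Hs]. simpl in *. unfold R_dist in *.
  assert (Hs1 : Rabs (s - t) < Phi a - t) by (eapply Rlt_le_trans; [exact Hs|apply Rmin_l]).
  assert (Hs2 : Rabs (s - t) < t - Phi b) by (eapply Rlt_le_trans; [exact Hs|apply Rmin_r]).
  apply Rabs_def2 in Hs1. apply Rabs_def2 in Hs2.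
  destruct (p_range s) as [[Q1 Q2] Q3]; [lra|].
  assert (a < phiinv s).
  { destruct (Rlt_le_dec a (phiinv s)) as [?|C]; auto.
    pose proof (Phi_le (phiinv s) a Q1 C). lra. }
  assert (phiinv s < b).
  { destruct (Rlt_le_dec (phiinv s) b) as [?|C]; auto.
    pose proof (Phi_le b (phiinv s) ltac:(lra) C). lra. }
  apply Rabs_def1; lra.
Qed.

Lemma p_deriv t : 0 < t -> is_derive phiinv t (- (phiinv t * psi (phiinv t))).
Proof.
  intros Ht. destruct (p_range t Ht) as [[P1 P2] P3].
  assert (Hpp : 0 < psi (phiinv t)) by (apply Hpos; lra).
  assert (Hp0 : 0 < phiinv t) by (pose proof uinf_pos; lra).
  assert (E : psit (phiinv t) = psi (phiinv t)) by (unfold psit; rewrite Rmin_left by lra; auto).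
  replace (- (phiinv t * psi (phiinv t))) with (/ (- fi (phiinv t))).
  2: { unfold fi. rewrite E. field. lra. }
  apply is_derive_Reals.
  apply (inv_deriv Phi phiinv t _ t Ht).
  - pose proof (fi_pos (phiinv t) P1). lra.
  - apply is_derive_Reals. apply Phi_deriv; auto.
  - apply p_cont; auto.
  - intros s Hs. apply Rabs_def2 in Hs. apply p_range. lra.
Qed.


Definition Fo u := beta * N - beta * St * exp ((beta / gamma) * Rt) * u + gamma * ln u.

Lemma Fo_uinf : Fo uinf = 0.
Proof.
  unfold Fo. rewrite Huinf at 2. rewrite ln_exp.
  replace (beta * N - beta * St * exp (beta / gamma * Rt) * uinf + gamma * (- (beta / gamma) * alpha))
    with (beta * (N - St * exp (beta / gamma * Rt) * uinf - alpha)) by (field; lra).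
  rewrite Huinf, <- Halpha. ring.
Qed.

Lemma Fo_near K : 0 < K -> exists eta, 0 < eta /\ forall u, uinf < u < uinf + eta -> Rabs (Fo u) < K.
Proof.
  intros HK. pose proof uinf_pos as U.
  assert (Hc : continuity_pt Fo uinf).
  { apply continuity_pt_filterlim. apply (ex_derive_continuous (K:=R_AbsRing) (V:=R_NormedModule)).
    unfold Fo. auto_derive. lra. }
  destruct (Hc K HK) as [alp [Ha H]].
  exists alp. split; auto. intros u Hu.
  specialize (H u). simpl in H. unfold R_dist in H. rewrite Fo_uinf, Rminus_0_r in H.
  apply H. split. split. exact I. lra. apply Rabs_def1; lra.
Qed.

Lemma psi_contpt u : uinf < u < u0 -> continuity_pt psi u.
Proof.
  intros H. apply continuity_pt_filterlim.
  apply (ex_derive_continuous (K:=R_AbsRing) (V:=R_NormedModule)). apply HC1; auto.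
Qed.

Lemma Dpsi_pos u eps : uinf < u < u0 -> 0 < eps -> eps <= psi u ->
  Rabs (Fo u) < (gamma + delta) * eps / delta -> 0 < Derive psi u.
Proof.
  intros Hu He Hpe HF. pose proof uinf_pos as U.
  assert (Hp : 0 < psi u) by lra.
  assert (Hu0' : 0 < u) by lra.
  pose proof (Hode u Hu) as E. fold (Fo u) in E.
  assert (E2 : Derive psi u * (psi u * u) = (gamma + delta) * psi u - delta * Fo u).
  { replace (Derive psi u * (psi u * u)) with
      ((Derive psi u * psi u - (gamma + delta) / u * psi u) * u + (gamma + delta) * psi u) by (field; lra).
    rewrite E. field. lra. }
  assert (delta * Fo u < (gamma + delta) * eps).
  { apply Rabs_def2 in HF. destruct HF as [HF _].
    apply Rmult_lt_compat_l with (r := delta) in HF; auto.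
    replace (delta * ((gamma + delta) * eps / delta)) with ((gamma + delta) * eps) in HF by (field; lra).
    auto. }
  assert (0 < Derive psi u * (psi u * u)).
  { rewrite E2. assert ((gamma + delta) * eps <= (gamma + delta) * psi u) by (apply Rmult_le_compat_l; lra). lra. }
  assert (0 < psi u * u) by (apply Rmult_lt_0_compat; lra).
  destruct (Rlt_le_dec 0 (Derive psi u)) as [?|C]; auto.
  assert (Derive psi u * (psi u * u) <= 0).
  { apply Rmult_le_0_r; lra. }
  lra.
Qed.


Lemma exists_small e w : 0 < e -> uinf < w <= u0 -> exists a, uinf < a < w /\ psi a < e.
Proof.
  intros He Hw. pose proof uinf_pos as U.
  destruct (Classical_Prop.classic (exists a, uinf < a < w /\ psi a < e)) as [H|H]; auto.
  exfalso.
  assert (Hge : forall a, uinf < a < w -> e <= psi a).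
  { intros a Ha. destruct (Rle_lt_dec e (psi a)) as [?|C]; auto. exfalso; apply H; eauto. }
  set (b := (uinf + w) / 2).
  assert (Hb1 : uinf < b) by (unfold b; lra).
  assert (Hb2 : b < w) by (unfold b; lra).
  set (B := (b - uinf) / (uinf * e) + Phi b).
  assert (HB0 : 0 <= (b - uinf) / (uinf * e)).
  { apply Rmult_le_pos. lra. left. apply Rinv_0_lt_compat. apply Rmult_lt_0_compat; lra. }
  assert (HPb : 0 <= Phi b) by (apply Phi_nonneg; lra).
  destruct (p_range (B + 1)) as [[Q1 Q2] Q3]. unfold B; lra.
  set (q := phiinv (B + 1)) in *.
  destruct (Rle_lt_dec b q) as [Hq|Hq].
  - pose proof (Phi_le b q Hb1 Hq). unfold B in *. lra.
  - assert (Ch : Phi q = RInt fi q b + Phi b).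
    { unfold Phi. rewrite <- (RInt_Chasles fi q b u0). reflexivity.
      apply exRI; lra. apply exRI; try lra; apply uinf_u0. }
    assert (Hle : RInt fi q b <= RInt (fun _ => / (uinf * e)) q b).
    { apply RInt_le. lra. apply exRI; lra. apply ex_RInt_const.
      intros x Hx. unfold fi. apply Rinv_le_contravar. apply Rmult_lt_0_compat; lra.
      unfold psit. rewrite Rmin_left by lra.
      apply Rmult_le_compat; try lra. apply Hge; lra. }
    rewrite RInt_const in Hle. unfold scal in Hle; simpl in Hle; unfold mult in Hle; simpl in Hle.
    assert ((b - q) * / (uinf * e) <= (b - uinf) / (uinf * e)).
    { apply Rmult_le_compat_r. left. apply Rinv_0_lt_compat. apply Rmult_lt_0_compat; lra. lra. }
    unfold B in *. lra.
Qed.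

Lemma psi_small eps : 0 < eps -> exists a, uinf < a < u0 /\ forall u, uinf < u <= a -> psi u < eps.
Proof.
  intros He. pose proof uinf_pos as U. pose proof uinf_u0 as U0.
  assert (HK : 0 < (gamma + delta) * eps / delta).
  { apply Rdiv_lt_0_compat; [apply Rmult_lt_0_compat|]; lra. }
  destruct (Fo_near _ HK) as [eta [Heta HF]].
  set (w := Rmin (uinf + eta) u0).
  assert (Hw1 : uinf < w) by (unfold w; apply Rmin_glb_lt; lra).
  assert (Hw2 : w <= u0) by (unfold w; apply Rmin_r).
  assert (Hw3 : w <= uinf + eta) by (unfold w; apply Rmin_l).
  destruct (exists_small eps w He (conj Hw1 Hw2)) as [a [[Ha1 Ha2] Ha3]].
  exists a. split. lra. intros u [Hu1 Hu2].
  destruct (Rle_lt_or_eq_dec _ _ Hu2) as [Hua|Hua]; [|subst; auto].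
  destruct (Rlt_le_dec (psi u) eps) as [?|Hpu]; auto. exfalso.
  destruct (continuity_ab_maj psi u a) as [m [Hm1 Hm2]]. lra.
  { intros c Hc. apply psi_contpt. lra. }
  assert (Hmu : eps <= psi m) by (specialize (Hm1 u); lra).
  assert (Hma : m < a).
  { destruct Hm2 as [_ [H|H]]; auto. subst. lra. }
  assert (HD : 0 < Derive psi m).
  { apply (Dpsi_pos m eps). lra. auto. auto. apply HF. lra. }
  assert (Hdl : derivable_pt_lim psi m (Derive psi m)).
  { apply is_derive_Reals. apply Derive_correct. apply HC1. lra. }
  destruct (Hdl _ HD) as [d Hdd].
  set (h := Rmin (d / 2) ((a - m) / 2)).
  assert (Hh0 : 0 < h) by (unfold h; apply Rmin_glb_lt; pose proof (cond_pos d); lra).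
  assert (Hh1 : h <= d / 2) by (unfold h; apply Rmin_l).
  assert (Hh2 : h <= (a - m) / 2) by (unfold h; apply Rmin_r).
  specialize (Hdd h ltac:(lra)). rewrite Rabs_pos_eq in Hdd by lra.
  specialize (Hdd ltac:(pose proof (cond_pos d); lra)).
  apply Rabs_def2 in Hdd. destruct Hdd as [_ Hdd].
  assert (Hq : 0 < (psi (m + h) - psi m) / h) by lra.
  assert (0 < psi (m + h) - psi m).
  { replace (psi (m + h) - psi m) with ((psi (m + h) - psi m) / h * h) by (field; lra).
    apply Rmult_lt_0_compat; lra. }
  specialize (Hm1 (m + h) ltac:(lra)). lra.
Qed.


Lemma p_small a : uinf < a -> forall t, Rmax 0 (Phi a) < t -> phiinv t <= a.
Proof.
  intros Ha t Ht.
  assert (Ht0 : 0 < t) by (eapply Rle_lt_trans; [apply Rmax_l|exact Ht]).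
  assert (Ht1 : Phi a < t) by (eapply Rle_lt_trans; [apply Rmax_r|exact Ht]).
  destruct (p_range t Ht0) as [_ Q].
  destruct (Rle_lt_dec (phiinv t) a) as [?|C]; auto.
  pose proof (Phi_decr a (phiinv t) Ha C). lra.
Qed.

Lemma L0_psip : L0 (fun t => psi (phiinv t)).
Proof.
  intros eps He. destruct (psi_small eps He) as [a [Ha H]].
  exists (Rmax 0 (Phi a)). intros t Ht.
  assert (Ht0 : 0 < t) by (eapply Rle_lt_trans; [apply Rmax_l|exact Ht]).
  destruct (p_range t Ht0) as [[Q1 Q2] _].
  pose proof (p_small a (proj1 Ha) t Ht).
  assert (0 < psi (phiinv t)) by (apply Hpos; lra).
  rewrite Rabs_pos_eq by lra. apply H. lra.
Qed.

Lemma L0_ppsip : L0 (fun t => phiinv t * psi (phiinv t)).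
Proof.
  intros eps He. pose proof uinf_pos as U. pose proof uinf_u0 as U0.
  destruct (psi_small (eps / u0)) as [a [Ha H]]. apply Rdiv_lt_0_compat; lra.
  exists (Rmax 0 (Phi a)). intros t Ht.
  assert (Ht0 : 0 < t) by (eapply Rle_lt_trans; [apply Rmax_l|exact Ht]).
  destruct (p_range t Ht0) as [[Q1 Q2] _].
  pose proof (p_small a (proj1 Ha) t Ht).
  assert (0 < psi (phiinv t)) by (apply Hpos; lra).
  assert (psi (phiinv t) < eps / u0) by (apply H; lra).
  rewrite Rabs_pos_eq by (apply Rmult_le_pos; lra).
  apply Rle_lt_trans with (u0 * psi (phiinv t)).
  apply Rmult_le_compat_r; lra.
  replace eps with (u0 * (eps / u0)) by (field; lra).
  apply Rmult_lt_compat_l; lra.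
Qed.

Lemma L0_exp : L0 (fun t => exp (- delta * t)).
Proof.
  intros eps He. exists (- ln eps / delta). intros t Ht.
  rewrite Rabs_pos_eq by (left; apply exp_pos).
  rewrite <- (exp_ln eps He). apply exp_increasing.
  apply Rmult_lt_compat_l with (r := delta) in Ht; auto.
  replace (delta * (- ln eps / delta)) with (- ln eps) in Ht by (field; lra). lra.
Qed.

Definition gK v := exp (delta * Phi v).
Definition K x := RInt gK x u0.

Lemma gK_cont v : uinf < v -> continuous gK v.
Proof.
  intros Hv. unfold gK.
  apply (continuous_comp Phi (fun y => exp (delta * y))).
  apply (ex_derive_continuous (K:=R_AbsRing) (V:=R_NormedModule)). eexists; apply Phi_deriv; auto.
  apply (ex_derive_continuous (K:=R_AbsRing) (V:=R_NormedModule)). auto_derive. auto.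
Qed.

Lemma exRK a b : uinf < a -> uinf < b -> ex_RInt gK a b.
Proof.
  intros Ha Hb'. apply (ex_RInt_continuous (V:=R_CompleteNormedModule)). intros z [Hz1 Hz2]. apply gK_cont.
  eapply Rlt_le_trans; [|exact Hz1]. apply Rmin_Rgt; auto.
Qed.

Lemma K_deriv x : uinf < x -> is_derive K x (- gK x).
Proof.
  intros Hx. apply (is_derive_RInt' gK K x u0).
  exists (mkposreal _ (Rlt_Rminus _ _ Hx)). intros y Hy.
  unfold ball in Hy; simpl in Hy; unfold AbsRing_ball, abs, minus, plus, opp in Hy; simpl in Hy.
  apply Rabs_def2 in Hy.
  unfold K. apply (RInt_correct (V:=R_CompleteNormedModule)). apply exRK. lra. apply uinf_u0.
  apply gK_cont; auto.
Qed.

Lemma K_nonneg x : uinf < x -> x <= u0 -> 0 <= K x.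
Proof.
  intros Hx Hx0. unfold K. apply RInt_ge_0; auto. apply exRK; auto. pose proof uinf_u0; lra.
  intros; left; apply exp_pos.
Qed.

Lemma L0_eK : L0 (fun t => exp (- delta * t) * K (phiinv t)).
Proof.
  intros eps He. pose proof uinf_pos as U. pose proof uinf_u0 as U0.
  set (q := uinf + Rmin (eps / 2) ((u0 - uinf) / 2)).
  assert (Hq1 : uinf < q) by (unfold q; apply Rplus_lt_le_0_compat' || (assert (0 < Rmin (eps / 2) ((u0 - uinf) / 2)) by (apply Rmin_glb_lt; lra); lra)).
  assert (Hq2 : q < u0) by (unfold q; pose proof (Rmin_r (eps / 2) ((u0 - uinf) / 2)); lra).
  assert (Hq3 : q - uinf <= eps / 2) by (unfold q; pose proof (Rmin_l (eps / 2) ((u0 - uinf) / 2)); lra).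
  assert (HKq : 0 <= K q) by (apply K_nonneg; lra).
  destruct (L0_exp (eps / 2 / (K q + 1))) as [T1 H1].
  { apply Rdiv_lt_0_compat; lra. }
  exists (Rmax T1 (Rmax 0 (Phi q))). intros t Ht.
  assert (Ht1 : T1 < t) by (eapply Rle_lt_trans; [apply Rmax_l|exact Ht]).
  assert (Ht2 : Rmax 0 (Phi q) < t) by (eapply Rle_lt_trans; [apply Rmax_r|exact Ht]).
  assert (Ht0 : 0 < t) by (eapply Rle_lt_trans; [apply Rmax_l|exact Ht2]).
  destruct (p_range t Ht0) as [[Q1 Q2] Q3].
  pose proof (p_small q Hq1 t Ht2) as Hpq.
  specialize (H1 t Ht1). rewrite Rabs_pos_eq in H1 by (left; apply exp_pos).
  set (x := phiinv t) in *.
  assert (HKx : 0 <= K x) by (apply K_nonneg; lra).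
  assert (Ch : K x = RInt gK x q + K q).
  { unfold K. rewrite <- (RInt_Chasles gK x q u0). reflexivity.
    apply exRK; lra. apply exRK; lra. }
  assert (Hle : RInt gK x q <= RInt (fun _ => exp (delta * t)) x q).
  { apply RInt_le. lra. apply exRK; lra. apply ex_RInt_const.
    intros v Hv. unfold gK. rewrite <- Q3.
    pose proof (Phi_le x v Q1 (Rlt_le _ _ (proj1 Hv))) as HP.
    destruct (Rle_lt_or_eq_dec _ _ HP) as [HP'|HP'].
    left; apply exp_increasing; apply Rmult_lt_compat_l; auto.
    rewrite HP'; right; reflexivity. }
  rewrite RInt_const in Hle. unfold scal in Hle; simpl in Hle; unfold mult in Hle; simpl in Hle.
  assert (Ee : exp (- delta * t) * exp (delta * t) = 1).
  { rewrite <- exp_plus. replace (- delta * t + delta * t) with 0 by ring. apply exp_0. }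
  assert (He1 : 0 < exp (- delta * t)) by apply exp_pos.
  assert (A1 : exp (- delta * t) * K x <= (q - x) + exp (- delta * t) * K q).
  { rewrite Ch, Rmult_plus_distr_l. apply Rplus_le_compat_r.
    apply Rle_trans with (exp (- delta * t) * ((q - x) * exp (delta * t))).
    apply Rmult_le_compat_l; lra.
    right. replace (exp (- delta * t) * ((q - x) * exp (delta * t))) with ((q - x) * (exp (- delta * t) * exp (delta * t))) by ring.
    rewrite Ee; ring. }
  assert (A2 : exp (- delta * t) * K q <= eps / 2).
  { apply Rle_trans with (eps / 2 / (K q + 1) * K q).
    apply Rmult_le_compat_r; lra.
    replace (eps / 2 / (K q + 1) * K q) with (eps / 2 * (K q / (K q + 1))) by (field; lra).
    assert (K q / (K q + 1) <= 1).
    { apply Rmult_le_reg_r with (K q + 1). lra. unfold Rdiv. rewrite Rmult_assoc, Rinv_l by lra. lra. }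
    assert (0 <= K q / (K q + 1)) by (apply Rmult_le_pos; [lra|left; apply Rinv_0_lt_compat; lra]).
    nra. }
  rewrite Rabs_pos_eq by (apply Rmult_le_pos; lra).
  assert (q - x < eps / 2) by lra.
  lra.
Qed.


Variable Et : R.
Definition E2 t := Et * exp (- delta * t) + St * exp ((beta / gamma) * Rt) * exp (- delta * t) * K (phiinv t).

Lemma Dp t : 0 < t -> Derive phiinv t = - (phiinv t * psi (phiinv t)).
Proof. intros; apply is_derive_unique; apply p_deriv; auto. Qed.

Lemma DK x : uinf < x -> Derive K x = - gK x.
Proof. intros; apply is_derive_unique; apply K_deriv; auto. Qed.

Lemma dS t : 0 < t -> is_derive (S_of beta gamma St Rt phiinv) t
   (- (St * exp ((beta / gamma) * Rt)) * (phiinv t * psi (phiinv t))).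
Proof.
  intros Ht. unfold S_of. auto_derive.
  eexists; apply p_deriv; auto.
  rewrite Dp by auto. ring.
Qed.

Lemma dR t : 0 < t -> is_derive (R_of beta gamma phiinv) t ((gamma / beta) * psi (phiinv t)).
Proof.
  intros Ht. destruct (p_range t Ht) as [[Q1 Q2] Q3]. pose proof uinf_pos.
  unfold R_of. auto_derive.
  split. eexists; apply p_deriv; auto. split. lra. auto.
  rewrite Dp by auto. field. lra.
Qed.

Lemma dE2 t : 0 < t -> is_derive E2 t (- delta * E2 t + St * exp ((beta / gamma) * Rt) * (phiinv t * psi (phiinv t))).
Proof.
  intros Ht. destruct (p_range t Ht) as [[Q1 Q2] Q3]. pose proof uinf_pos.
  unfold E2. auto_derive.
  split. eexists; apply K_deriv; auto. split. eexists; apply p_deriv; auto. auto.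
  rewrite Dp by auto. rewrite DK by auto. unfold gK. rewrite Q3.
  assert (Ee : exp (- delta * t) * exp (delta * t) = 1).
  { rewrite <- exp_plus. replace (- delta * t + delta * t) with 0 by ring. apply exp_0. }
  assert (Ep : exp (- delta * t) > 0) by apply exp_pos.
  replace (exp (delta * t)) with (/ exp (- delta * t)).
  field. lra.
  apply (Rmult_eq_reg_l (exp (- delta * t))). rewrite Ee. field. lra. lra.
Qed.

Lemma E_loc t : 0 < t -> locally t (fun s => E2 s = E_of beta gamma delta St Et Rt u0 psi phiinv s).
Proof.
  intros Ht. exists (mkposreal _ Ht). intros s Hs.
  unfold ball in Hs; simpl in Hs; unfold AbsRing_ball, abs, minus, plus, opp in Hs; simpl in Hs.
  apply Rabs_def2 in Hs.
  destruct (p_range s ltac:(lra)) as [[Q1 Q2] Q3].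
  unfold E2, E_of, K. f_equal. f_equal. apply RInt_ext. intros v Hv.
  rewrite Rmin_left, Rmax_right in Hv by lra. unfold gK. rewrite phi_Phi by lra. reflexivity.
Qed.

Lemma dE t : 0 < t -> is_derive (E_of beta gamma delta St Et Rt u0 psi phiinv) t
   (- delta * E2 t + St * exp ((beta / gamma) * Rt) * (phiinv t * psi (phiinv t))).
Proof. intros Ht. eapply is_derive_ext_loc. apply E_loc; auto. apply dE2; auto. Qed.

Definition I2 t := N - St * exp ((beta / gamma) * Rt) * phiinv t + (gamma / beta) * ln (phiinv t) - E2 t.

Lemma dI2 t : 0 < t -> is_derive I2 t (delta * E2 t - (gamma / beta) * psi (phiinv t)).
Proof.
  intros Ht. destruct (p_range t Ht) as [[Q1 Q2] Q3]. pose proof uinf_pos.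
  unfold I2. auto_derive.
  split. eexists; apply p_deriv; auto. split. eexists; apply p_deriv; auto. split. lra.
  split. eexists; apply dE2; auto. auto.
  rewrite Dp by auto. change (Derive (fun x : R => E2 x) t) with (Derive E2 t). rewrite (is_derive_unique _ _ _ (dE2 t Ht)). field. lra.
Qed.

Lemma dI t : 0 < t -> is_derive (I_of beta gamma delta St Et Rt N u0 psi phiinv) t
   (delta * E2 t - (gamma / beta) * psi (phiinv t)).
Proof.
  intros Ht. eapply is_derive_ext_loc. 2: apply dI2; auto.
  destruct (E_loc t Ht) as [e He]. exists e. intros s Hs.
  unfold I2, I_of. rewrite (He s Hs). reflexivity.
Qed.

Lemma L0_E2 : L0 E2.
Proof.
  apply (L0_ext (fun t => Et * exp (- delta * t) + (St * exp ((beta / gamma) * Rt)) * (exp (- delta * t) * K (phiinv t))) _ 0).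
  intros; unfold E2; ring.
  apply L0_comb. apply L0_exp. apply L0_eK.
Qed.

Lemma mainS : deriv_at_infty_zero (S_of beta gamma St Rt phiinv).
Proof.
  split. intros t Ht; eexists; apply dS; auto.
  apply L0_is_lim.
  apply (L0_ext (fun t => - (St * exp ((beta / gamma) * Rt)) * (phiinv t * psi (phiinv t)) + 0 * (phiinv t * psi (phiinv t))) _ 0).
  intros t Ht. rewrite (is_derive_unique _ _ _ (dS t Ht)). ring.
  apply L0_comb. apply L0_ppsip. apply L0_ppsip.
Qed.

Lemma mainR : deriv_at_infty_zero (R_of beta gamma phiinv).
Proof.
  split. intros t Ht; eexists; apply dR; auto.
  apply L0_is_lim.
  apply (L0_ext (fun t => (gamma / beta) * psi (phiinv t) + 0 * psi (phiinv t)) _ 0).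
  intros t Ht. rewrite (is_derive_unique _ _ _ (dR t Ht)). ring.
  apply L0_comb. apply L0_psip. apply L0_psip.
Qed.

Lemma mainE : deriv_at_infty_zero (E_of beta gamma delta St Et Rt u0 psi phiinv).
Proof.
  split. intros t Ht; eexists; apply dE; auto.
  apply L0_is_lim.
  apply (L0_ext (fun t => - delta * E2 t + St * exp ((beta / gamma) * Rt) * (phiinv t * psi (phiinv t))) _ 0).
  intros t Ht. rewrite (is_derive_unique _ _ _ (dE t Ht)). ring.
  apply L0_comb. apply L0_E2. apply L0_ppsip.
Qed.

Lemma mainI : deriv_at_infty_zero (I_of beta gamma delta St Et Rt N u0 psi phiinv).
Proof.
  split. intros t Ht; eexists; apply dI; auto.
  apply L0_is_lim.
  apply (L0_ext (fun t => delta * E2 t + (- (gamma / beta)) * psi (phiinv t)) _ 0).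
  intros t Ht. rewrite (is_derive_unique _ _ _ (dI t Ht)). ring.
  apply L0_comb. apply L0_E2. apply L0_psip.
Qed.

End Main.

Theorem theorem13
  (beta gamma delta St Et It Rt alpha : R) (psi phiinv : R -> R) :
  let N := St + Et + It + Rt in
  0 < beta -> 0 < gamma -> 0 < delta -> 0 < N ->
  (* (A1)-(A4) *)
  0 < It ->
  Et > (gamma / delta) * It ->
  St > delta * Et / (beta * It) ->
  0 <= Rt -> N > St * exp ((beta / gamma) * Rt) + Rt ->
  (* alpha: the solution in (Rt, N) of x = N - St e^{(b/g)Rt} e^{-(b/g)x} *)
  Rt < alpha < N ->
  alpha = N - St * exp ((beta / gamma) * Rt) * exp (- (beta / gamma) * alpha) ->
  (* (A5) *)
  St < (gamma / beta) * exp ((beta / gamma) * (alpha - Rt)) ->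
  let u0 := exp (- (beta / gamma) * Rt) in
  let uinf := exp (- (beta / gamma) * alpha) in
  (* psi: continuous and positive on (uinf, u0], C^1 on (uinf, u0), solves the ODE *)
  cont_on_Ioc psi uinf u0 ->
  (forall u, uinf < u <= u0 -> 0 < psi u) ->
  C1_on_Ioo psi uinf u0 ->
  (forall u, uinf < u < u0 ->
     Derive psi u * psi u - (gamma + delta) / u * psi u
     = - delta * ((beta * N - beta * St * exp ((beta / gamma) * Rt) * u
                   + gamma * ln u) / u)) ->
  psi u0 = beta * It ->
  (* phiinv: the inverse of phi : (uinf, u0] -> [0, oo) *)
  (forall t, 0 <= t -> uinf < phiinv t <= u0 /\ phi_of psi u0 (phiinv t) = t) ->
  deriv_at_infty_zero (S_of beta gamma St Rt phiinv) /\
  deriv_at_infty_zero (E_of beta gamma delta St Et Rt u0 psi phiinv) /\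
  deriv_at_infty_zero (I_of beta gamma delta St Et Rt N u0 psi phiinv) /\
  deriv_at_infty_zero (R_of beta gamma phiinv).
Proof.
  intros N Hb Hg Hd HN HI HE HS HR HNr [HRa _] Halpha H5 u0 uinf Hcont Hpos HC1 Hode Hpsi0 Hinv.
  split; [|split; [|split]].
  - apply (mainS beta gamma delta St N Rt alpha u0 uinf psi phiinv); auto.
  - apply (mainE beta gamma delta St N Rt alpha u0 uinf psi phiinv); auto.
  - apply (mainI beta gamma delta St N Rt alpha u0 uinf psi phiinv); auto.
  - apply (mainR beta gamma delta St N Rt alpha u0 uinf psi phiinv); auto.
Qed.
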